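(* Let $s$ be a positive integer, let $\lambda,\eta,n$ be numbers, put $c(x)=\lambda x+\eta$, and let $h_{s,i,j}$ be as in the context. Then $$\sum_{i=0}^{s-1}c(n-i)^s\sum_{j'=i+1}^{s}h_{s,i,j'}+\sum_{i=s+1}^{2s}(-1)^s c(n-i)^s\sum_{j'=0}^{i-s-1}h_{s,2s-i,s-j'}=\Big[\frac1s\binom{2s}{s-1}-1\Big]\lambda^s(s+1)!.$$
   Context: For a fixed positive integer $s$, the numbers $h_{s,i,j}$ (integers $i\ge 0$, $j$) are defined recursively by: $h_{s,i,j}=0$ if $j\le i$; for $i=0$ and $j\ge 1$, $h_{s,0,j}=\binom{s+j-1}{j}\frac{s-j}{s}$; for $i>0$ and $j>i$, $h_{s,i,j}=-\frac{s-j+1}{i}h_{s,i-1,j-1}-\frac{j-i}{i}h_{s,i-1,j}$. *)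

(* Defs.v *)
From mathcomp Require Import all_boot all_order all_algebra.
Set Implicit Arguments. Unset Strict Implicit. Unset Printing Implicit Defensive.
Import Order.TTheory GRing.Theory Num.Theory.
Local Open Scope ring_scope.

Fixpoint h (R : numFieldType) (s i j : nat) : R :=
  match i with
  | 0%N => if (j <= 0)%N then 0
           else 'C(s + j - 1, j)%:R * ((s%:R - j%:R) / s%:R)
  | i'.+1 =>
      if (j <= i'.+1)%N then 0
      else - ((s%:R - j%:R + 1) / i'.+1%:R) * h R s i' j.-1
           - ((j%:R - i'.+1%:R) / i'.+1%:R) * h R s i' j
  end.

(* Main.v *)
Require Import Defs.
From mathcomp Require Import all_boot all_order all_algebra.
From mathcomp Require Import ring.
Set Implicit Arguments. Unset Strict Implicit. Unset Printing Implicit Defensive.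
Import Order.TTheory GRing.Theory Num.Theory.
From mathcomp Require Import zify.
Lemma hockey m N : \sum_(0 <= j < N.+1) 'C(m + j, j) = 'C(m + N.+1, N).
Proof.
elim: N => [|N IH]; first by rewrite big_nat1 !bin0.
by rewrite big_nat_recr //= IH !addnS (binS (m + N).+1 N) addnC.
Qed.

Lemma wsum m N : \sum_(0 <= j < N.+2) 'C(m + j, j) * (N.+1 - j) = 'C(m + N.+2, N).
Proof.
elim: N => [|N IH].
  by rewrite big_nat_recr //= big_nat1 subnn muln0 addn0 bin0 muln1 bin0.
rewrite big_nat_recr //= subnn muln0 addn0.
rewrite (eq_big_nat _ _ (F2 := fun j => 'C(m + j, j) * (N.+1 - j) + 'C(m + j, j))); last first.
  by move=> i /andP [_ Hi]; rewrite subSn // mulnSr.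
rewrite big_split /= IH hockey.
by rewrite !addnS (binS (m + N).+2 N) addnC.
Qed.
Local Open Scope ring_scope.

Definition D (R : numFieldType) (k : nat) (f : nat -> R) : R :=
  \sum_(0 <= i < k.+1) (-1) ^+ i * 'C(k, i)%:R * f i.

Lemma D_succ (R : numFieldType) k (f : nat -> R) :
  D k.+1 f = D k (fun i => f i - f i.+1).
Proof.
rewrite /D big_nat_recl //= expr0 bin0 !mul1r.
under eq_bigr do rewrite binS natrD exprS mulrDr !mulrDl.
rewrite big_split /=.
have -> : \sum_(0 <= i < k.+1) (-1) * (-1) ^+ i * 'C(k, i)%:R * f i.+1
   = - \sum_(0 <= i < k.+1) (-1) ^+ i * 'C(k, i)%:R * f i.+1.
  by rewrite -sumrN; apply: eq_bigr => i _; rewrite !mulNr !mul1r.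
under [X in _ = X]eq_bigr do rewrite mulrBr.
rewrite big_split /= sumrN addrA; congr (_ - _).
rewrite [in LHS]big_nat_recr //= bin_small // mulr0 mul0r addr0.
rewrite [in RHS]big_nat_recl //= expr0 bin0 !mul1r.
by congr (_ + _); apply: eq_bigr => i _; rewrite exprS.
Qed.

Lemma D_ext (R : numFieldType) k (f g : nat -> R) :
  (forall i, f i = g i) -> D k f = D k g.
Proof. by move=> E; rewrite /D; apply: eq_bigr => i _; rewrite E. Qed.

Lemma D_lin (R : numFieldType) k (I : Type) (r : seq I) (F : I -> nat -> R) (a : I -> R) :
  D k (fun i => \sum_(t <- r) a t * F t i) = \sum_(t <- r) a t * D k (F t).
Proof.
rewrite /D.
under eq_bigr do rewrite mulr_sumr.
rewrite exchange_big /=; apply: eq_bigr => t _.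
rewrite mulr_sumr; apply: eq_bigr => i _.
by rewrite mulrCA.
Qed.

Definition M (R : numFieldType) k r : R := D k (fun i => i%:R ^+ r).

Lemma M_rec (R : numFieldType) k j :
  M R k.+1 j = - \sum_(0 <= t < j) 'C(j, t)%:R * M R k t.
Proof.
rewrite /M D_succ.
have E : forall i : nat, (i%:R ^+ j - i.+1%:R ^+ j : R)
     = \sum_(t < j) (- 'C(j, t)%:R) * i%:R ^+ t.
  move=> i; rewrite -nat1r exprDn big_ord_recr /= subnn expr1n mul1r binn mulr1n.
  rewrite addrC opprD addrA subrr add0r -sumrN.
  by apply: eq_bigr => t _; rewrite expr1n mul1r mulNr mulr_natl.
rewrite (D_ext _ E).
rewrite D_lin big_mkord -sumrN; apply: eq_bigr => t _; by rewrite mulNr.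
Qed.

Lemma M_prop (R : numFieldType) k :
  (forall r, (r < k)%N -> M R k r = 0) /\ M R k k = (-1) ^+ k * k`!%:R.
Proof.
elim: k => [|k [IH1 IH2]].
  split=> [r //|]; by rewrite /M /D big_nat1 !expr0 bin0 !mul1r.
have Z : forall r n, (r <= k)%N -> \sum_(0 <= t < r) 'C(n, t)%:R * M R k t = 0.
  move=> r n Hr; rewrite big1_seq // => t; rewrite mem_index_iota => /andP [_ Ht].
  by rewrite IH1 ?mulr0 //; apply: leq_trans Ht Hr.
split.
  by move=> r Hr; rewrite M_rec Z ?oppr0.
rewrite M_rec big_nat_recr //= Z // add0r IH2 binSn factS natrM exprS.
ring.
Qed.

Definition g (R : numFieldType) k (l e x : R) : R :=
  D k (fun i => (l * (x - i%:R) + e) ^+ k.+1).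

Lemma g_val (R : numFieldType) k (l e x : R) :
  g k l e x = k.+1%:R * (l * x + e) * ((- l) ^+ k * M R k k)
              + (- l) ^+ k.+1 * M R k k.+1.
Proof.
rewrite /g.
have E : forall i : nat, (l * (x - i%:R) + e) ^+ k.+1 =
   \sum_(0 <= r < k.+2) ('C(k.+1, r)%:R * (l * x + e) ^+ (k.+1 - r) * (- l) ^+ r) * i%:R ^+ r.
  move=> i; have -> : l * (x - i%:R) + e = (l * x + e) + (- l) * i%:R by ring.
  rewrite exprDn big_mkord; apply: eq_bigr => r _.
  by rewrite exprMn -mulr_natl; ring.
rewrite (D_ext _ E) D_lin.
have [Z1 Z2] := M_prop R k.
rewrite big_nat_recr //= big_nat_recr //= big1_seq; last first.
  by move=> r; rewrite mem_index_iota => /andP [_ Hr]; have := Z1 r Hr; rewrite /M => ->; rewrite mulr0.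
rewrite add0r subnn subSnn binn binSn expr1 expr0 /M.
ring.
Qed.

Lemma h_zero (R : numFieldType) s i j : (j <= i)%N -> h R s i j = 0.
Proof. by case: i => [|i] /= ->. Qed.

Lemma h_succ (R : numFieldType) s i j : h R s i.+1 j =
  - ((s%:R - j%:R + 1) / i.+1%:R) * h R s i j.-1 - ((j%:R - i.+1%:R) / i.+1%:R) * h R s i j.
Proof.
rewrite /=; case: leqP => // Hj.
rewrite (@h_zero R s i j.-1); last by case: j Hj.
case: (ltngtP j i.+1) Hj => // [Hj _|-> _].
  by rewrite h_zero // mulr0 mulr0 subrr.
by rewrite subrr mul0r mul0r mulr0 subrr.
Qed.

Definition S (R : numFieldType) s i : R := \sum_(0 <= j < s.+1) h R s i j.

Lemma S_rec (R : numFieldType) s i :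
  S R s i.+1 * i.+1%:R = - (s%:R - i.+1%:R) * S R s i.
Proof.
have Hi : (i.+1%:R : R) != 0 by rewrite pnatr_eq0.
rewrite /S mulr_suml.
rewrite (eq_bigr (fun j => - (s%:R - j%:R + 1) * h R s i j.-1 - (j%:R - i.+1%:R) * h R s i j)); last first.
  by move=> j _; rewrite h_succ; field; rewrite nat1r.
rewrite big_split /= sumrN big_nat_recl //= (@h_zero R s i 0) // mulr0 add0r.
rewrite [X in _ - X]big_nat_recr //= [in RHS]big_nat_recr //=.
rewrite mulrDr mulr_sumr opprD addrA; congr (_ + _); last by rewrite mulNr.
rewrite -sumrN -big_split; apply: eq_bigr => j _ /=; rewrite -natr1; ring.
Qed.

Lemma S_closed (R : numFieldType) k i : (i <= k)%N ->
  S R k.+1 i = (-1) ^+ i * 'C(k, i)%:R * S R k.+1 0.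
Proof.
elim: i => [|i IH] Hik; first by rewrite expr0 bin0 !mul1r.
have Hi : (i.+1%:R : R) != 0 by rewrite pnatr_eq0.
apply: (mulIf Hi); rewrite S_rec IH; last by apply: ltnW.
have H1 : ('C(k, i.+1)%:R * i.+1%:R : R) = (k%:R - i%:R) * 'C(k, i)%:R.
  by rewrite -natrM mulnC mul_bin_left natrM natrB //; apply: ltnW.
have H2 : (k.+1%:R - i.+1%:R : R) = k%:R - i%:R by rewrite -!natr1; ring.
rewrite H2 exprS.
transitivity (- ((-1) ^+ i * ('C(k, i.+1)%:R * i.+1%:R) * S R k.+1 0)); last by ring.
by rewrite H1; ring.
Qed.

Lemma S0_val (R : numFieldType) k :
  S R k.+1 0 = (k.+1%:R)^-1 * 'C(2 * k.+1, k.+1 - 1)%:R - 1.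
Proof.
have Hk : (k.+1%:R : R) != 0 by rewrite pnatr_eq0.
have E : forall j, (0 <= j < k.+2)%N -> h R k.+1 0 j =
    ('C(k + j, j) * (k.+1 - j))%:R / k.+1%:R - (j == 0%N)%:R.
  move=> j /andP [_ Hj]; case: j Hj => [|j] Hj /=.
    by rewrite addn0 bin0 subn0 mul1n divff // subrr.
  have -> : (k.+1 + j.+1 - 1 = k + j.+1)%N by lia.
  by rewrite natrM natrB // subr0 mulrA.
rewrite /S (eq_big_nat _ _ E) sumrB -mulr_suml -natr_sum wsum.
rewrite big_nat_recl // big1_seq /=; last first.
  by move=> j _.
have -> : (2 * k.+1 = k + k.+2)%N by lia.
by rewrite subn1 /= addr0 mulrC.
Qed.

Lemma Sfirst (R : numFieldType) s i : (i <= s)%N ->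
  \sum_(i.+1 <= j < s.+1) h R s i j = S R s i.
Proof.
move=> Hi; rewrite /S [in RHS](big_cat_nat _ (n:=i.+1)) // [X in _ = X + _]big1_seq ?add0r // => j.
by rewrite mem_index_iota => /andP [_ Hj]; rewrite h_zero // -ltnS.
Qed.

Lemma Ssecond (R : numFieldType) k t m : (t + m = k)%N ->
  \sum_(0 <= j < m.+1) h R k.+1 t (k.+1 - j) = S R k.+1 t.
Proof.
move=> Htm; rewrite /S [in RHS]big_nat_rev /=.
under [in RHS]eq_bigr do rewrite subSS.
rewrite [in RHS](big_cat_nat _ (n:=m.+1)) //=; last by lia.
rewrite [X in _ = _ + X]big1_seq ?addr0 // => j.
by rewrite mem_index_iota => /andP [_ Hj]; apply: h_zero; lia.
Qed.

Lemma sign_lem (R : numFieldType) k i : (i <= k)%N ->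
  (-1) ^+ k.+1 * (-1) ^+ (k - i) = - (-1) ^+ i :> R.
Proof.
move=> Hi; rewrite -{1}(subnK Hi) exprS exprD.
have P2 : ((-1) ^+ (k - i) * (-1) ^+ (k - i) : R) = 1 by rewrite -expr2 sqrr_sign.
transitivity (- ((-1) ^+ i * ((-1) ^+ (k - i) * (-1) ^+ (k - i))) : R); first by ring.
by rewrite P2 mulr1.
Qed.

Lemma negpow2 (R : numFieldType) k (l x : R) :
  (- l) ^+ k * ((-1) ^+ k * x) = l ^+ k * x.
Proof.
have Q : ((-1) ^+ k * (-1) ^+ k : R) = 1 by rewrite -expr2 sqrr_sign.
by rewrite (exprNn l k) -mulrA [l ^+ k * (_ * _)]mulrCA !mulrA Q mul1r.
Qed.

Unset Implicit Arguments.

Theorem proposition12 (R : numFieldType) (s : nat) (hs : (0 < s)%N)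
    (lambda eta n : R) :
  let c := fun x : R => lambda * x + eta in
  \sum_(0 <= i < s) (fun x => lambda * x + eta) (n - i%:R) ^+ s * \sum_(i.+1 <= j < s.+1) h R s i j
  + \sum_(s.+1 <= i < (2 * s).+1)
      (-1) ^+ s * (fun x => lambda * x + eta) (n - i%:R) ^+ s * \sum_(0 <= j < i - s) h R s (2 * s - i) (s - j)
  = ((s%:R)^-1 * 'C(2 * s, s - 1)%:R - 1) * lambda ^+ s * (s.+1)`!%:R.
Proof.
case: s hs => [//|k] _ c; rewrite /c; clear c.
have F1 : \sum_(0 <= i < k.+1) (fun x => lambda * x + eta) (n - i%:R) ^+ k.+1 * \sum_(i.+1 <= j < k.+2) h R k.+1 i j
          = S R k.+1 0 * g k lambda eta n.
  rewrite /g /D mulr_sumr; apply: eq_big_nat => i /andP [_ Hi].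
  rewrite Sfirst; last by apply: ltnW.
  rewrite S_closed; last by rewrite -ltnS.
  ring.
have F2 : \sum_(k.+2 <= i < (2 * k.+1).+1)
      (-1) ^+ k.+1 * (fun x => lambda * x + eta) (n - i%:R) ^+ k.+1 * \sum_(0 <= j < i - k.+1) h R k.+1 (2 * k.+1 - i) (k.+1 - j)
      = - (S R k.+1 0 * g k lambda eta (n - k.+2%:R)).
  rewrite (big_addn 0 _ k.+2).
  have -> : ((2 * k.+1).+1 - k.+2 = k.+1)%N by lia.
  rewrite /g /D mulr_sumr -sumrN; apply: eq_big_nat => i /andP [_ Hi].
  have -> : (i + k.+2 - k.+1 = i.+1)%N by lia.
  have -> : (2 * k.+1 - (i + k.+2) = k - i)%N by lia.
  rewrite (@Ssecond R k (k - i) i); last by lia.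
  rewrite S_closed ?leq_subr // bin_sub //.
  have cs : (fun x => lambda * x + eta) (n - (i + k.+2)%:R) = lambda * ((n - k.+2%:R) - i%:R) + eta
    by rewrite /= natrD; ring.
  rewrite cs.
  have E := @sign_lem R k i Hi.
  transitivity (S R k.+1 0 * 'C(k, i)%:R * (lambda * ((n - k.+2%:R) - i%:R) + eta) ^+ k.+1
                * ((-1) ^+ k.+1 * (-1) ^+ (k - i)) : R); first by ring.
  by rewrite E; ring.
rewrite F1 F2 !g_val S0_val.
have [_ Z2] := M_prop R k.
rewrite Z2 !negpow2 !factS !natrM.
move: (M R k k.+1) (k`!%:R : R) ((k.+1%:R^-1 * 'C(2 * k.+1, k.+1 - 1)%:R - 1) : R) => B F A.
rewrite -!natr1 !exprS.
move: (lambda ^+ k) ((- lambda) ^+ k) => L L2.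
ring.
Qed.
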